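(* Let $\{f_t\}$ be the sequence generated by POLK with $f_0=0$, and suppose Assumptions (A1)–(A4) hold. Then for all $t$, $$\mathbb E\big[\|f_{t+1}-f^*\|_{\mathcal H}^2\mid\mathcal F_t\big]\le\|f_t-f^*\|_{\mathcal H}^2-2\eta_t\,[R(f_t)-R(f^* )]+2\epsilon_t\|f_t-f^*\|_{\mathcal H}+\eta_t^2\sigma^2.$$
   Context: Setting: $\mathcal X\subset\mathbb R^p$, $\mathcal Y\subset\mathbb R$; $\mathcal H$ is a reproducing kernel Hilbert space of functions $f:\mathcal X\to\mathbb R$ with reproducing kernel $\kappa$ (so $\langle f,\kappa(x,\cdot)\rangle_{\mathcal H}=f(x)$). $(x,y)$ is a random pair on $\mathcal X\times\mathcal Y$ with a fixed joint distribution, and $(x_t,y_t)$, $t=0,1,2,\dots$ are i.i.d. copies of it. The loss is $\ell:\mathbb R\times\mathcal Y\to\mathbb R$, $\ell'(z,y)=\partial\ell(z,y)/\partial z$. With $\lambda>0$, the regularized expected risk is $R(f)=\mathbb E_{x,y}[\ell(f(x),y)]+\frac{\lambda}{2}\|f\|_{\mathcal H}^2$ and $f^*=\arg\min_{f\in\mathcal H}R(f)$. POLK (Parsimonious Online Learning with Kernels): given step-sizes $\eta_t>0$ and approximation budgets $\epsilon_t>0$, set $f_0=0$ with empty dictionary $D_0$. At step $t$, with $f_t=\sum_{n=1}^{M_t}w_n\kappa(d_n,\cdot)$ parameterized by dictionary $D_t=[d_1,\dots,d_{M_t}]$, form $\tilde f_{t+1}=(1-\eta_t\lambda)f_t-\eta_t\ell'(f_t(x_t),y_t)\kappa(x_t,\cdot)$,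 represented by dictionary $\tilde D_{t+1}=[D_t,\,x_t]$. Then apply destructive kernel orthogonal matching pursuit (KOMP) with budget $\epsilon_t$: starting from $D=\tilde D_{t+1}$, repeatedly compute for each remaining element $d_j$ the error $\gamma_j=\min_{w}\|\tilde f_{t+1}-\sum_{k\neq j}w_k\kappa(d_k,\cdot)\|_{\mathcal H}$; if $\min_j\gamma_j>\epsilon_t$ stop, otherwise remove the minimizing element and continue (while the dictionary is nonempty). The output dictionary is $D_{t+1}$, and $f_{t+1}$ is the orthogonal projection of $\tilde f_{t+1}$ onto $\mathcal H_{D_{t+1}}=\mathrm{span}\{\kappa(d,\cdot):d\in D_{t+1}\}$; thus $\|f_{t+1}-\tilde f_{t+1}\|_{\mathcal H}\le\epsilon_t$. Define $\hat\nabla_t=\ell'(f_t(x_t),y_t)\kappa(x_t,\cdot)+\lambda f_t$ and the projected stochastic gradient $\tilde\nabla_t=(f_t-f_{t+1})/\eta_t$, so $f_{t+1}=f_t-\eta_t\tilde\nabla_t$. $\mathcal F_t$ denotes the sigma-algebra generated by the algorithm history up to time $t$ (so that $\mathbb E[\hat\nabla_t\mid\mathcal F_t]=\nabla_f R(f_t)$). Assumptions: (A1) $\mathcal X$ and $\mathcal Y$ are compact and $\sup_{x\in\mathcal X}\sqrt{\kappa(x,x)}=X<\infty$. (A2) $\ell$ is $C$-Lipschitz in its first argument: $|\ell(z,y)-\ell(z',y)|\le C|z-z'|$ for all $z,z'\in\mathbb R$, $y\in\mathcal Y$. (A3) $\ell(z,y)$ is convex and differentiable in $z$ on $\mathbb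 R$ for all $y$. (A4) $\mathbb E[\|\tilde\nabla_t\|_{\mathcal H}^2\mid\mathcal F_t]\le\sigma^2$ for all $t$. *)

(* Defs.v *)
From HB Require Import structures.
From mathcomp Require Import all_boot all_order all_algebra.
From mathcomp Require Import all_classical all_reals all_analysis.
Set Implicit Arguments. Unset Strict Implicit. Unset Printing Implicit Defensive.
Import Order.TTheory GRing.Theory Num.Theory.
Import numFieldNormedType.Exports.
Local Open Scope classical_set_scope.
Local Open Scope ring_scope.

(* The carrier is an abstract real vector space H with an
   inner product [ip]; an element f : H is identified with the function
   x |-> f(x) := <f, kappa(x,.)> (reproducing property), and the map
   f |-> (x |-> f(x)) on Xs is injective (elements of H ARE functions on Xs). *)
Record rkhs (R : realType) (V : Type) (Xs : set V) (H : lmodType R) := RKHS {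
  ip : H -> H -> R;
  ksec : V -> H;
  ipC : forall f g, ip f g = ip g f;
  ipDl : forall (a : R) f g h, ip (a *: f + g) h = a * ip f h + ip g h;
  ip_ge0 : forall f, 0 <= ip f f;
  ip_eq0 : forall f, ip f f = 0 -> f = 0;
  ip_complete : forall u : nat -> H,
    (forall e : R, 0 < e -> exists N : nat, forall m n : nat, (N <= m)%N -> (N <= n)%N ->
        Num.sqrt (ip (u m - u n) (u m - u n)) < e) ->
    exists l : H, forall e : R, 0 < e -> exists N : nat, forall n : nat, (N <= n)%N ->
        Num.sqrt (ip (u n - l) (u n - l)) < e;
  eval_inj : forall f g, (forall x, Xs x -> ip f (ksec x) = ip g (ksec x)) -> f = g
}.

Section RKHSDefs.
Context {R : realType} {V : zmodType} {Xs : set V} {H : lmodType R}.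
Variable K : rkhs Xs H.

Definition hnorm (f : H) : R := Num.sqrt (ip K f f).
Definition ev (f : H) (x : V) : R := ip K f (ksec K x).
Definition kappa (x x' : V) : R := ip K (ksec K x) (ksec K x').

Definition spanD (D : seq V) : set H :=
  [set g | exists w : nat -> R, g = \sum_(i < size D) w i *: ksec K (nth 0 D i)].

Definition is_proj (D : seq V) (g p : H) : Prop :=
  spanD D p /\ forall q, spanD D q -> ip K (g - p) q = 0.

Definition rem_idx (D : seq V) (j : nat) : seq V := take j D ++ drop j.+1 D.

Definition gamma (g : H) (D : seq V) (j : nat) : R :=
  inf [set hnorm (g - q) | q in spanD (rem_idx D j)].

(* destructive kernel orthogonal matching pursuit with budget eps, applied
   to the function g: komp_run eps g D D' means that, starting from the
   dictionary D, the procedure can terminate with output dictionary D'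
   (any minimizing index may be removed in case of ties). *)
Inductive komp_run (eps : R) (g : H) : seq V -> seq V -> Prop :=
| komp_nil : komp_run eps g [::] [::]
| komp_stop D : D <> [::] ->
    (forall j, (j < size D)%N -> eps < gamma g D j) -> komp_run eps g D D
| komp_remove D j D' : (j < size D)%N ->
    (forall k, (k < size D)%N -> gamma g D j <= gamma g D k) ->
    gamma g D j <= eps ->
    komp_run eps g (rem_idx D j) D' -> komp_run eps g D D'.

End RKHSDefs.

Definition lossd {R : realType} (l : R -> R -> R) (z y : R) : R :=
  derive1 (fun z' => l z' y) z.

Definition upd {T : Type} (s : nat -> T) (t : nat) (z : T) : nat -> T :=
  fun i => if i == t then z else s i.

Local Open Scope ereal_scope.
(* regularized expected risk R(f) = E[l(f(x),y)] + lam/2 ||f||^2, where the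
   random pair (x,y) is (xo z, yo z) with z ~ mu *)
Definition risk {R : realType} {V : zmodType} {Xs : set V} {H : lmodType R}
  (K : rkhs Xs H) {d : measure_display} {Z : measurableType d}
  (mu : probability Z R) (xo : Z -> V) (yo : Z -> R) (l : R -> R -> R)
  (lam : R) (f : H) : R :=
  (fine (\int[mu]_z (l (ev K f (xo z)) (yo z))%:E) + lam / 2 * hnorm K f ^+ 2)%R.

(* Main.v *)
Require Import Defs.
From HB Require Import structures.
From mathcomp Require Import all_boot all_order all_algebra.
From mathcomp Require Import all_classical all_reals all_analysis.
From mathcomp Require Import ring lra.
Import Order.TTheory GRing.Theory Num.Theory.
Import numFieldNormedType.Exports.
Local Open Scope classical_set_scope.
Local Open Scope ring_scope.
Lemma conv_deriv (R : realType) (f : R -> R) (u v : R) :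
  derivable f u 1 ->
  (forall (a b t : R), 0 <= t -> t <= 1 -> f (t * a + (1 - t) * b) <= t * f a + (1 - t) * f b) ->
  derive1 f u * (v - u) <= f v - f u.
Proof.
move=> df fc.
set g := (fun h : R => h^-1 *: ((f \o shift u) (h *: 1) - f u)).
have cg : g @ 0^' --> derive1 f u.
  by rewrite derive1E; apply: df.
have key : forall h, h != 0 -> 0 < h / (v - u) -> h / (v - u) <= 1 ->
    (f (h + u) - f u) <= h / (v - u) * (f v - f u).
  move=> h h0 t0 t1.
  have := fc v u _ (ltW t0) t1.
  have -> : h / (v - u) * v + (1 - h / (v - u)) * u = h + u.
    have vu : v - u != 0.
      by apply/eqP => e; move: t0; rewrite e invr0 mulr0 ltxx.
    by rewrite mulrBl mul1r addrCA -mulrBr mulfVK // addrC.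
  move=> H; lra.
have gE : forall h, g h = h^-1 * (f (h + u) - f u).
  move=> h; rewrite /g /=; congr (_ * (f (_ + _) - _)); exact: mulr1.
case: (ltgtP u v) => [uv|vu|->]; last by rewrite subrr mulr0 subrr.
- have := cvg_dnbhs_at_right cg.
  move=> cg'.
  have : derive1 f u <= (f v - f u) / (v - u).
    apply: (cvgr_to_le cg').
    near=> h.
    have h0 : 0 < h by near: h; exact: nbhs_right_gt.
    have hl : h < v - u by near: h; apply: nbhs_right_lt; rewrite subr_gt0.
    move: (gE h); rewrite /g => ->.
    have vu0 : 0 < v - u by rewrite subr_gt0.
    have := key h (lt0r_neq0 h0) (divr_gt0 h0 vu0).
    rewrite ler_pdivrMr // mul1r => /(_ (ltW hl)) K.
    apply: (le_trans (ler_wpM2l _ K)); first by rewrite invr_ge0 ltW.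
    by rewrite mulrA mulrA mulVf ?gt_eqF // mul1r mulrC.
  have vu0 : 0 < v - u by rewrite subr_gt0.
  by rewrite ler_pdivlMr.
- have := cvg_dnbhs_at_left cg.
  move=> cg'.
  have : (f v - f u) / (v - u) <= derive1 f u.
    apply: (cvgr_to_ge cg').
    near=> h.
    have h0 : h < 0 by near: h; exact: nbhs_left_lt.
    have hl : v - u < h by near: h; apply: nbhs_left_gt; rewrite subr_lt0.
    move: (gE h); rewrite /g => ->.
    have vu0 : v - u < 0 by rewrite subr_lt0.
    have tE : h / (v - u) = (- h) / (u - v) by rewrite -opprB invrN mulrN mulNr.
    have uv0 : 0 < u - v by rewrite subr_gt0 -subr_lt0.
    have t0 : 0 < h / (v - u) by rewrite tE divr_gt0 // oppr_gt0.
    have t1 : h / (v - u) <= 1.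
      by rewrite tE ler_pdivrMr // mul1r -opprB lerN2 ltW.
    have K := key h (ltr0_neq0 h0) t0 t1.
    have hi : h^-1 <= 0 by rewrite invr_le0 ltW.
    have := ler_wnM2l hi K.
    by rewrite mulrA mulrA mulVf ?lt_eqF // mul1r mulrC.
  have vu0 : v - u < 0 by rewrite subr_lt0.
  by rewrite ler_ndivrMr.
Unshelve. all: by end_near.
Qed.
Section Hil.
Variables (R : realType) (V : zmodType) (Xs : set V) (H : lmodType R) (K : rkhs Xs H).
Local Notation ip := (ip K).

Lemma ipZl a f g : ip (a *: f) g = a * ip f g.
Proof. by have := ipDl K a f 0 g; rewrite addr0 => ->; have := ipDl K 1 0 0 g; rewrite scaler0 !addr0 mul1r; lra. Qed.
Lemma ipDl' f g h : ip (f + g) h = ip f h + ip g h.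
Proof. by rewrite -[f]scale1r ipDl mul1r scale1r. Qed.
Lemma ip0l g : ip 0 g = 0.
Proof. by rewrite -(scale0r (0:H)) ipZl mul0r. Qed.
Lemma ipNl f g : ip (- f) g = - ip f g.
Proof. by rewrite -scaleN1r ipZl mulN1r. Qed.
Lemma ipBl f g h : ip (f - g) h = ip f h - ip g h.
Proof. by rewrite ipDl' ipNl. Qed.
Lemma ipZr a f g : ip f (a *: g) = a * ip f g.
Proof. by rewrite ipC ipZl ipC. Qed.
Lemma ipDr f g h : ip h (f + g) = ip h f + ip h g.
Proof. by rewrite ipC ipDl' ipC [ip g _]ipC. Qed.
Lemma ipBr f g h : ip h (f - g) = ip h f - ip h g.
Proof. by rewrite ipC ipBl ipC [ip g _]ipC. Qed.

Lemma hnorm_ge0 f : 0 <= hnorm K f.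
Proof. exact: sqrtr_ge0. Qed.
Lemma hnorm2 f : hnorm K f ^+ 2 = ip f f.
Proof. by rewrite /hnorm sqr_sqrtr // ip_ge0. Qed.

Lemma CS f g : ip f g <= hnorm K f * hnorm K g.
Proof.
have A0 := ip_ge0 K f; have C0 := ip_ge0 K g.
have q : forall r, 0 <= ip f f * r ^+ 2 - 2 * ip f g * r + ip g g.
  move=> r; have := ip_ge0 K (r *: f - g).
  rewrite ipBl !ipBr !ipZl !ipZr (ipC K g f); lra.
suff : ip f g ^+ 2 <= ip f f * ip g g.
  move=> h; rewrite /hnorm -sqrtrM //.
  apply: (le_trans (ler_norm _)); rewrite -sqrtr_sqr.
  by rewrite ler_sqrt // ?mulr_ge0.
case: (ltrP 0 (ip f f)) => Ap.
  have := q (ip f g / ip f f).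
  set B := ip f g; set A := ip f f; set C := ip g g => h.
  have e : A * (B / A) ^+ 2 - 2 * B * (B / A) + C = C - B ^+ 2 / A.
    by field; rewrite gt_eqF.
  rewrite e subr_ge0 ler_pdivrMr // in h; lra.
have A0' : ip f f = 0 by apply/eqP; rewrite eq_le Ap.
have f0 := ip_eq0 A0'. by rewrite f0 !ip0l expr0n /= mul0r.
Qed.


Lemma span0 D : spanD K D 0.
Proof. by exists (fun _ => 0); rewrite big1 // => i _; rewrite scale0r. Qed.
Lemma spanB D p q : spanD K D p -> spanD K D q -> spanD K D (p - q).
Proof.
move=> [w1 ->] [w2 ->]; exists (fun i => w1 i - w2 i).
by rewrite -sumrB; apply: eq_bigr => i _; rewrite scalerBl.
Qed.
Lemma spanZ D c p : spanD K D p -> spanD K D (c *: p).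
Proof.
move=> [w ->]; exists (fun i => c * w i).
by rewrite scaler_sumr; apply: eq_bigr => i _; rewrite scalerA.
Qed.
Lemma span_rcons D x f : spanD K D f -> spanD K (rcons D x) f.
Proof.
move=> [w ->]; exists (fun i => if (i < size D)%N then w i else 0).
rewrite size_rcons big_ord_recr /= ltnn scale0r addr0.
apply: eq_bigr => i _; rewrite ltn_ord nth_rcons ltn_ord //.
Qed.
Lemma span_rcons_x D x : spanD K (rcons D x) (ksec K x).
Proof.
exists (fun i => if i == size D then 1 else 0).
rewrite size_rcons big_ord_recr /= eqxx scale1r nth_rcons ltnn eqxx big1 ?add0r //.
by move=> i _; rewrite ltn_eqF ?scale0r.
Qed.

Lemma ipsq a b : ip (a + b) (a + b) = ip a a + 2 * ip a b + ip b b.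
Proof. by rewrite ipDl' !ipDr (ipC K b a); lra. Qed.

Lemma proj_best D g p q : is_proj K D g p -> spanD K D q -> hnorm K (g - p) <= hnorm K (g - q).
Proof.
move=> [sp orth] sq.
have o := orth (p - q) (spanB _ _ _ sp sq).
have e : g - q = (g - p) + (p - q) by rewrite addrA subrK.
rewrite /hnorm ler_sqrt ?ip_ge0 // e (ipsq (g - p) (p - q)) o; have := ip_ge0 K (p - q); lra.
Qed.

Lemma proj_le_inf D g p : is_proj K D g p ->
  hnorm K (g - p) <= inf [set hnorm K (g - q) | q in spanD K D].
Proof.
move=> pr; apply: lb_le_inf.
  by exists (hnorm K (g - 0)); exists 0 => //; exact: span0.
by move=> y [q sq <-]; exact: proj_best _ _ _ _ pr sq.
Qed.

Lemma komp_inv eps g D D' : komp_run K eps g D D' ->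
  D' = D \/ inf [set hnorm K (g - q) | q in spanD K D'] <= eps.
Proof.
elim => [|D0 _ _|D0 j D1 _ _ gl _ [->|IH]]; [by left|by left| |by right].
by right.
Qed.

Lemma ipNr f g : ip f (- g) = - ip f g.
Proof. by rewrite ipC ipNl ipC. Qed.

Lemma pointwise (Ft fs p ftil k : H) eta lam c eps l1 l2 evFt evfs :
  ftil = (1 - eta * lam) *: Ft - (eta * c) *: k ->
  hnorm K (ftil - p) <= eps ->
  ip Ft k = evFt -> ip fs k = evfs ->
  c * (evfs - evFt) <= l2 - l1 ->
  0 < eta -> 0 <= lam ->
  hnorm K (p - fs) ^+ 2 <= hnorm K (Ft - fs) ^+ 2 - 2 * eta * (l1 - l2)
     - eta * lam * (hnorm K Ft ^+ 2 - hnorm K fs ^+ 2)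
     + 2 * eps * hnorm K (Ft - fs)
     + eta ^+ 2 * hnorm K (eta^-1 *: (Ft - p)) ^+ 2.
Proof.
move=> ftE he eF es cv e0 l0.
set a := Ft - fs; set w := Ft - p; set e := ftil - p.
have F1 : ip (p - fs) (p - fs) = ip a a - 2 * ip a w + ip w w.
  have -> : p - fs = a + (- w) by rewrite /a /w opprB [in RHS]addrC addrA subrK.
  by rewrite ipsq ipNr ipNl ipNr opprK; lra.
have F2 : ip a w = ip a Ft - ip a p by rewrite ipBr.
have F3 : ip a e = ip a ftil - ip a p by rewrite ipBr.
have F4 : ip a ftil = (1 - eta * lam) * ip a Ft - eta * c * ip a k.
  by rewrite ftE ipBr !ipZr.
have F5 : ip a k = evFt - evfs by rewrite ipBl eF es.
have F6 : ip a Ft = ip Ft Ft - ip fs Ft by rewrite ipBl.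
have F6' : ip a a = ip Ft Ft - 2 * ip fs Ft + ip fs fs.
  by rewrite /a ipBl !ipBr (ipC K Ft fs); lra.
have F7 : - ip a e <= hnorm K a * hnorm K e.
  have := CS a (- e); rewrite ipNr.
  suff -> : hnorm K (- e) = hnorm K e by [].
  by rewrite /hnorm ipNl ipNr opprK.
have F8 : hnorm K a * hnorm K e <= eps * hnorm K a.
  by rewrite mulrC ler_wpM2r // hnorm_ge0.
have F9 : eta ^+ 2 * hnorm K (eta^-1 *: w) ^+ 2 = ip w w.
  rewrite hnorm2 ipZl ipZr; field; exact: lt0r_neq0.
have F10 : 0 <= eta * lam * ip a a by rewrite !mulr_ge0 ?ip_ge0 // ltW.
have F11 : eta * (c * (evfs - evFt)) <= eta * (l2 - l1) by rewrite ler_pM2l.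
rewrite hnorm2 F1 F9 !hnorm2.
have X : ip a a = hnorm K a ^+ 2 by rewrite hnorm2.
rewrite -/a.
rewrite F5 F6 in F4; rewrite F6' in F10; lra.
Qed.

End Hil.
Arguments komp_inv {R V Xs H K eps g D D'}.
Arguments proj_best {R V Xs H K D g p q}.
Arguments proj_le_inf {R V Xs H K D g p}.
Arguments spanB {R V Xs H K D p q}.
Arguments spanZ {R V Xs H K D} c {p}.
Arguments span_rcons {R V Xs H K D} x {f}.
Arguments span_rcons_x {R V Xs H K}.
Arguments span0 {R V Xs H K}.
Arguments pointwise {R V Xs H K} [Ft fs p ftil k eta lam c eps l1 l2 evFt evfs].

Lemma hnormZ (R : realType) (V : zmodType) (Xs : set V) (H : lmodType R) (K : rkhs Xs H) c (f : H) :
  hnorm K (c *: f) = `|c| * hnorm K f.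
Proof.
by rewrite /hnorm ipZl ipZr mulrA -expr2 sqrtrM ?sqr_ge0 // sqrtr_sqr.
Qed.

Lemma hnormN (R : realType) (V : zmodType) (Xs : set V) (H : lmodType R) (K : rkhs Xs H) (f g : H) :
  hnorm K (f - g) = hnorm K (g - f).
Proof.
have -> : f - g = (-1) *: (g - f) by rewrite scaleN1r opprB.
by rewrite hnormZ normrN normr1 mul1r.
Qed.

Theorem lemma1 (R : realType) (p : nat) (Xs : set 'rV[R]_p) (Ys : set R)
  (H : lmodType R) (K : rkhs Xs H)
  (d : measure_display) (Z : measurableType d) (mu : probability Z R)
  (xo : Z -> 'rV[R]_p) (yo : Z -> R) (l : R -> R -> R)
  (lam C Xb sigma : R) (eta eps : nat -> R)
  (F : nat -> (nat -> Z) -> H) (Dic : nat -> (nat -> Z) -> seq 'rV[R]_p)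
  (fstar : H) :
  (* parameters *)
  0 < lam -> (forall t, 0 < eta t) -> (forall t, 0 < eps t) ->
  (* the random pair (x,y) = (xo z, yo z), z ~ mu, takes values in X x Y *)
  (forall z, Xs (xo z)) -> (forall z, Ys (yo z)) ->
  (* the expected risk is well defined (finite) for every f in H *)
  (forall f : H, mu.-integrable setT (fun z => (l (ev K f (xo z)) (yo z))%:E)) ->
  (* f* = argmin_{f in H} R(f) *)
  (forall f : H, risk K mu xo yo l lam fstar <= risk K mu xo yo l lam f) ->
  (* (A1) *)
  compact Xs -> compact Ys ->
  (forall x, Xs x -> Num.sqrt (kappa K x x) <= Xb) ->
  (* (A2) *)
  (forall (y z z' : R), Ys y -> `|l z y - l z' y| <= C * `|z - z'|) ->
  (* (A3) *)
  (forall y, Ys y ->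
     (forall z : R, derivable (fun z' => l z' y) z 1) /\
     (forall (a b u : R), 0 <= u -> u <= 1 ->
        l (u * a + (1 - u) * b) y <= u * l a y + (1 - u) * l b y)) ->
  (* POLK, run on the i.i.d. sample sequence s : nat -> Z,
     (x_t, y_t) = (xo (s t), yo (s t)) *)
  (forall s, F 0%N s = 0 /\ Dic 0%N s = [::]) ->
  (forall t s s', (forall i, (i < t)%N -> s i = s' i) ->
     F t s = F t s' /\ Dic t s = Dic t s') ->
  (forall t s,
     let ft := F t s in
     let xt := xo (s t) in
     let ftil := (1 - eta t * lam) *: ft
                 - (eta t * lossd l (ev K ft xt) (yo (s t))) *: ksec K xt in
     komp_run K (eps t) ftil (rcons (Dic t s) xt) (Dic t.+1 s) /\
     is_proj K (Dic t.+1 s) ftil (F t.+1 s)) ->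
  (* f_{t+1} is a measurable function of the fresh sample (x_t, y_t) *)
  (forall t s (g : H),
     measurable_fun setT (fun z => hnorm K (F t.+1 (upd s t z) - g))) ->
  (* (A4): E[ ||proj. stoch. gradient||^2 | F_t ] <= sigma^2 *)
  (forall t s,
     (\int[mu]_z
        (hnorm K ((eta t)^-1 *: (F t s - F t.+1 (upd s t z))) ^+ 2)%:E
      <= (sigma ^+ 2)%:E)%E) ->
  (* conclusion: E[ ||f_{t+1} - f*||^2 | F_t ] <= ... *)
  forall t s,
    (\int[mu]_z (hnorm K (F t.+1 (upd s t z) - fstar) ^+ 2)%:E
     <= (hnorm K (F t s - fstar) ^+ 2
         - 2 * eta t * (risk K mu xo yo l lam (F t s) - risk K mu xo yo l lam fstar)
         + 2 * eps t * hnorm K (F t s - fstar)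
         + eta t ^+ 2 * sigma ^+ 2)%:E)%E.
Proof.
move=> lam0 eta0 eps0 Xo Yo lint fmin _ _ _ _ A3 F0 Fcaus Fstep Fmeas A4 t s.
set Ft := F t s.
rewrite /risk.
set I1 := (\int[mu]_z (l (ev K Ft (xo z)) (yo z))%:E)%E.
set I2 := (\int[mu]_z (l (ev K fstar (xo z)) (yo z))%:E)%E.
have Fts : forall z, F t (upd s t z) = Ft /\ Dic t (upd s t z) = Dic t s.
  move=> z; apply: Fcaus => i it; rewrite /upd ifF //; apply/negbTE.
  by rewrite neq_ltn it.
have ut : forall z, upd s t z t = z by move=> z; rewrite /upd eqxx.
have spanFt : spanD K (Dic t s) Ft.
  rewrite /Ft; case: t {Fts ut I1 I2 Ft} => [|t].
    by have [-> ->] := F0 s; exact: span0.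
  by have := Fstep t s; move=> /= -[_ [sp _]].
set N := fun z => hnorm K ((eta t)^-1 *: (F t s - F t.+1 (upd s t z))) ^+ 2.
set L1 := fun z => l (ev K Ft (xo z)) (yo z).
set L2 := fun z => l (ev K fstar (xo z)) (yo z).
set LHS := fun z => hnorm K (F t.+1 (upd s t z) - fstar) ^+ 2.
set c0 := hnorm K (Ft - fstar) ^+ 2 - eta t * lam * (hnorm K Ft ^+ 2 - hnorm K fstar ^+ 2)
   + 2 * eps t * hnorm K (Ft - fstar).
have PW : forall z, LHS z <= c0 + 2 * eta t * L2 z + - (2 * eta t) * L1 z + eta t ^+ 2 * N z.
  move=> z; have [Fz Dz] := Fts z.
  have := Fstep t (upd s t z); move=> /=; rewrite Fz Dz ut => -[kr pr].
  set ftil := (1 - eta t * lam) *: Ft - _ *: _ in kr pr.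
  have err : hnorm K (ftil - F t.+1 (upd s t z)) <= eps t.
    case: (komp_inv kr) => [eD|inf].
      have sp : spanD K (Dic t.+1 (upd s t z)) ftil.
        rewrite eD; apply: spanB; apply: spanZ; [exact: span_rcons|exact: span_rcons_x].
      apply: le_trans (proj_best pr sp) _.
      by rewrite subrr /hnorm ip0l sqrtr0 ltW.
    exact: le_trans (proj_le_inf pr) inf.
  have [der conv] := A3 (yo z) (Yo z).
  have cv := @conv_deriv R (l^~ (yo z)) (ev K Ft (xo z)) (ev K fstar (xo z)) (der (ev K Ft (xo z))) conv.
  have := pointwise (Ft:=Ft) (fs:=fstar) (p:=F t.+1 (upd s t z)) (ftil := ftil)
    (k := ksec K (xo z)) (eta := eta t) (lam:=lam)
    (c := lossd l (ev K Ft (xo z)) (yo z)) (eps := eps t) (l1 := L1 z) (l2 := L2 z)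
    (evFt := ev K Ft (xo z)) (evfs := ev K fstar (xo z)) erefl err erefl erefl cv
    (eta0 t) (ltW lam0).
  rewrite /LHS /N /c0; lra.
have Nge0 : forall z, 0 <= N z by move=> z; exact: sqr_ge0.
have mLHS : measurable_fun setT LHS by apply: measurable_realfun.measurable_funX; exact: Fmeas.
have mN : measurable_fun setT N.
  have -> : N = fun z => ((eta t)^-1 * hnorm K (F t.+1 (upd s t z) - Ft)) ^+ 2.
    apply/funext => z; rewrite /N hnormZ hnormN ger0_norm // invr_ge0 ltW //.
  apply: measurable_realfun.measurable_funX; apply: measurable_realfun.measurable_funM; [exact: measurable_cst|exact: Fmeas].
have iN : mu.-integrable setT (fun z => (N z)%:E).
  apply/integrableP; split; first exact/measurable_realfun.measurable_EFinP.
  under eq_integral => z _ do rewrite gee0_abs ?lee_fin //.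
  apply: le_lt_trans (A4 t s) _; exact: ltry.
have iL1 : mu.-integrable setT (fun z => (L1 z)%:E) by exact: lint.
have iL2 : mu.-integrable setT (fun z => (L2 z)%:E) by exact: lint.
set Qf := fun z => (c0%:E + ((2 * eta t)%:E * (L2 z)%:E + ((- (2 * eta t))%:E * (L1 z)%:E
   + (eta t ^+ 2)%:E * (N z)%:E)))%E.
have iQ : mu.-integrable setT Qf.
  apply: (integrableD measurableT); first exact: finite_measure_integrable_cst.
  apply: (integrableD measurableT); first exact: (integrableZl measurableT).
  by apply: (integrableD measurableT); exact: (integrableZl measurableT).
have QE : forall z, Qf z = (c0 + 2 * eta t * L2 z + - (2 * eta t) * L1 z + eta t ^+ 2 * N z)%:E.
  by move=> z; rewrite /Qf -!EFinM -!EFinD !addrA.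
have iLHS : mu.-integrable setT (fun z => (LHS z)%:E).
  apply: (le_integrable measurableT _ _ iQ); first exact/measurable_realfun.measurable_EFinP.
  move=> z _; rewrite QE !gee0_abs ?lee_fin ?sqr_ge0 //; try exact: PW.
  apply: le_trans (PW z); exact: sqr_ge0.
have main : (\int[mu]_z (LHS z)%:E <= \int[mu]_z Qf z)%E.
  by apply: (le_integral measurableT iLHS iQ) => z _; rewrite QE lee_fin; exact: PW.
set IN := (\int[mu]_z (N z)%:E)%E.
have iR2 : mu.-integrable setT (fun z => ((- (2 * eta t))%:E * (L1 z)%:E + (eta t ^+ 2)%:E * (N z)%:E)%E).
  by apply: (integrableD measurableT); exact: (integrableZl measurableT).
have iR1 : mu.-integrable setT (fun z => ((2 * eta t)%:E * (L2 z)%:E + ((- (2 * eta t))%:E * (L1 z)%:E + (eta t ^+ 2)%:E * (N z)%:E))%E).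
  by apply: (integrableD measurableT) => //; exact: (integrableZl measurableT).
have IQ : (\int[mu]_z Qf z = c0%:E + ((2 * eta t)%:E * I2 + ((- (2 * eta t))%:E * I1 + (eta t ^+ 2)%:E * IN)))%E.
  rewrite /Qf (integralD measurableT (finite_measure_integrable_cst mu c0 measurableT) iR1).
  rewrite (integralD measurableT (integrableZl measurableT (2 * eta t) iL2) iR2).
  rewrite (integralD measurableT (integrableZl measurableT (- (2 * eta t)) iL1) (integrableZl measurableT (eta t ^+ 2) iN)).
  rewrite !integralZl //.
  have -> : (\int[mu]_x (EFin \o cst c0) x = c0%:E)%E.
    rewrite (_ : EFin \o cst c0 = cst c0%:E) // integral_cst //. by rewrite -[RHS]mule1; congr (_ * _)%E; exact: probability_setT.
  by [].
rewrite IQ in main.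
have f1 : I1 = (fine I1)%:E by rewrite fineK // (integrable_fin_num measurableT).
have f2 : I2 = (fine I2)%:E by rewrite fineK // (integrable_fin_num measurableT).
have fN : IN = (fine IN)%:E by rewrite fineK // (integrable_fin_num measurableT).
have hN := A4 t s; rewrite -/IN fN lee_fin in hN.
rewrite f1 f2 fN -!EFinM -!EFinD in main.
apply: (le_trans main); rewrite lee_fin.
have : eta t ^+ 2 * fine IN <= eta t ^+ 2 * sigma ^+ 2 by rewrite ler_wpM2l // sqr_ge0.
rewrite /c0; lra.
Qed.
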